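(* Let $n_1,\dots,n_l\ge 2$ be integers, and let $a_1,\dots,a_l$ be the discrepancies of the chain $[n_1,\dots,n_l]$, i.e. the unique solution of $\sum_j a_jE_j\cdot E_i=2-n_i$ for a chain of smooth rational curves $E_1,\dots,E_l$ with $E_i^2=-n_i$, $E_i\cdot E_{i+1}=1$, $E_i\cdot E_j=0$ for $|i-j|\ge2$. Then $a_k+a_{k+1}<1$ for all $1\le k\le l-1$ (equivalently, the minimal resolution of a log terminal singularity of type $A_{q,q_1}$ with this resolution graph has no redundant point) if and only if $(n_1,\dots,n_l)$, up to reversing the order, is one of: $(2,\dots,2)$ with $\alpha\ge1$ entries; $(2,\dots,2,3)$ with $\alpha\ge1$ entries equal to $2$; $(2,2,3,2)$; $(2,3,2)$; $(2,4)$; $(n)$ with $n\ge3$.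
   Context: Here all discrepancies satisfy $0\le a_i<1$, so a point of the minimal resolution is redundant (i.e. the multiplicity of $N=\sum a_iE_i$ at it is at least $1$) exactly when it is $E_k\cap E_{k+1}$ with $a_k+a_{k+1}\ge1$. Notation $[n_1,\dots,n_l]$ stands for the Hirzebruch–Jung continued fraction $n_1-1/(n_2-1/(\cdots-1/n_l))=q/q_1$ describing the singularity of type $A_{q,q_1}$; $[n_1,\dots,n_l]$ and $[n_l,\dots,n_1]$ describe the same singularity. *)

(* Defs.v *)
From HB Require Import structures.
From mathcomp Require Import all_boot all_order all_algebra.
Set Implicit Arguments. Unset Strict Implicit. Unset Printing Implicit Defensive.
Import Order.TTheory GRing.Theory Num.Theory.
Local Open Scope ring_scope.

(* Intersection numbers E_i . E_j (0-indexed) for the chain [n_1,...,n_l]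
   given as the sequence ns = [:: n_1; ...; n_l]. *)
Definition Eint (ns : seq nat) (i j : nat) : rat :=
  if i == j then - ((nth 0%N ns i)%:R)
  else if (i == j.+1) || (j == i.+1) then 1 else 0.

Definition is_discrepancy (ns : seq nat) (a : seq rat) : Prop :=
  size a = size ns /\
  forall i : nat, (i < size ns)%N ->
    \sum_(j < size ns) a`_j * Eint ns j i = 2 - (nth 0%N ns i)%:R.

Definition in_list (ns : seq nat) : Prop :=
  (exists alpha : nat, (1 <= alpha)%N /\ ns = nseq alpha 2%N) \/
  (exists alpha : nat, (1 <= alpha)%N /\ ns = rcons (nseq alpha 2%N) 3%N) \/
  ns = [:: 2; 2; 3; 2]%N \/
  ns = [:: 2; 3; 2]%N \/
  ns = [:: 2; 4]%N \/
  (exists n : nat, (3 <= n)%N /\ ns = [:: n]).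

(* Main.v *)
Require Import Defs.
From HB Require Import structures.
From mathcomp Require Import all_boot all_order all_algebra.
From mathcomp Require Import zify ring lra.
Import Order.TTheory GRing.Theory Num.Theory.
Local Open Scope ring_scope.

Lemma minP (w : nat -> rat) (L : nat) :
  exists i, (i <= L)%N /\ forall j, (j <= L)%N -> w i <= w j.
Proof.
elim: L => [|L [i [hi hm]]].
  by exists 0%N; split => // j; rewrite leqn0 => /eqP ->.
have [le|lt] := lerP (w i) (w L.+1).
  exists i; split; first by lia.
  move=> j; rewrite leq_eqVlt => /orP[/eqP ->//|]; rewrite ltnS; exact: hm.
exists L.+1; split => // j; rewrite leq_eqVlt => /orP[/eqP ->//|]; rewrite ltnS => hj.
by apply: le_trans (ltW lt) (hm j hj).
Qed.

Lemma MP (N w : nat -> rat) (L : nat) :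
  (forall i, (0 < i < L)%N -> 2 <= N i) ->
  (forall i, (0 < i < L)%N -> w i.-1 + w i.+1 <= N i * w i) ->
  0 <= w 0%N -> 0 <= w L -> forall i, (i <= L)%N -> 0 <= w i.
Proof.
move=> hN hw h0 hL.
have [i0 [hi0 hm]] := minP w L.
have [ge|lt] := lerP 0 (w i0).
  by move=> i hi; apply: le_trans ge (hm i hi).
exfalso.
pose P j := (j <= L)%N && (w j == w i0).
have P0 : exists j, P j by exists i0; rewrite /P hi0 eqxx.
case: (ex_minnP P0) => j /andP[hjL /eqP hj] hmin.
have j0 : j != 0%N by apply/eqP => e; move: h0; rewrite -e hj => /(lt_le_trans lt); rewrite ltxx.
have jL : j != L by apply/eqP => e; move: hL; rewrite -e hj => /(lt_le_trans lt); rewrite ltxx.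
have hj' : (0 < j < L)%N by lia.
have h1 : w i0 < w j.-1.
  rewrite lt_neqAle hm; last by lia.
  rewrite andbT; apply/negP => /eqP e.
  have := hmin j.-1; rewrite /P e eqxx andbT.
  have -> : (j.-1 <= L)%N by lia.
  by move=> /(_ isT); lia.
have h2 : w i0 <= w j.+1 by apply: hm; lia.
have := hw j hj'; have := hN j hj'; rewrite hj => hn hh.
nra.
Qed.

Lemma lin (b : nat -> rat) (p q : nat) :
  (forall k, (p < k < q)%N -> b k.-1 + b k.+1 = 2 * b k) ->
  forall r, (r <= q - p)%N -> b (p + r)%N = b p + r%:R * (b p.+1 - b p).
Proof.
move=> hk.
have sl : forall r, (r.+1 <= q - p)%N -> b (p + r.+1)%N - b (p + r)%N = b p.+1 - b p.
  elim => [|r IH] hr; first by rewrite addn1 addn0.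
  have := hk (p + r.+1)%N; rewrite !addnS /=.
  have -> : (p < (p + r).+1 < q)%N by lia.
  move=> /(_ isT) e.
  have := IH (ltnW hr); rewrite addnS => e2. lra.
elim => [|r IH] hr; first by rewrite addn0 mul0r addr0.
have := sl r hr; rewrite IH; last by lia.
rewrite -addn1 natrD mulrDl mul1r. lra.
Qed.

Definition Nf (ns : seq nat) (i : nat) : rat := (nth 0%N ns i.-1)%:R.

Definition solb (ns : seq nat) (b : nat -> rat) : Prop :=
  b 0%N = 1 /\ b (size ns).+1 = 1 /\
  forall i, (0 < i <= size ns)%N -> Nf ns i * b i = b i.-1 + b i.+1.

Definition goodb (ns : seq nat) (b : nat -> rat) : Prop :=
  forall k, (0 < k < size ns)%N -> 1 < b k + b k.+1.

Lemma Nf_ge2 ns i : all (fun n => 2 <= n)%N ns -> (0 < i <= size ns)%N -> 2 <= Nf ns i.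
Proof.
move=> /all_nthP hall hi; rewrite /Nf (ler_nat rat 2); apply: hall; lia.
Qed.

Lemma bounds ns b : all (fun n => 2 <= n)%N ns -> solb ns b ->
  forall i, (i <= (size ns).+1)%N -> 0 <= b i /\ b i <= 1.
Proof.
move=> hall [h0 [hL he]] i hi; split.
  apply: (@MP (Nf ns) b _ _ _ _ _ i hi) => //.
  - move=> j hj; apply: Nf_ge2 => //; lia.
  - by move=> j hj; rewrite he //; lia.
  - by rewrite h0.
  - by rewrite hL.
rewrite -subr_ge0.
apply: (@MP (Nf ns) (fun j => 1 - b j) _ _ _ _ _ i hi) => /=.
  - move=> j hj; apply: Nf_ge2 => //; lia.
  - move=> j hj; have := he j; have := @Nf_ge2 ns j hall.
    have -> : (0 < j <= size ns)%N by lia.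
    move=> /(_ isT) h2 /(_ isT) e; rewrite mulrBr mulr1 e; lra.
  - by rewrite h0 subrr.
  - by rewrite hL subrr.
Qed.

Lemma bad ns b i j : all (fun n => 2 <= n)%N ns -> solb ns b ->
  (0 < i)%N -> (i < j)%N -> (j <= size ns)%N ->
  (3 <= nth 0 ns i.-1)%N -> (3 <= nth 0 ns j.-1)%N ->
  (forall k, (i < k < j)%N -> nth 0 ns k.-1 = 2%N) -> ~ goodb ns b.
Proof.
move=> hall hs i0 ij jl hi hj hk hg.
have hb := bounds ns b hall hs.
case: hs => [h0 [hL he]].
have hl := @lin b i j.
have := hl _ (j - i)%N (leqnn _); have := hl _ (j - i).-1 ltac:(lia).
have -> : (i + (j - i))%N = j by lia.
have -> : (i + (j - i).-1)%N = j.-1 by lia.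
have ee : forall k, (i < k < j)%N -> b k.-1 + b k.+1 = 2 * b k.
  move=> k hk'; rewrite -he; last by lia.
  by rewrite /Nf hk.
move=> /(_ ee) e1 /(_ ee) e2.
have ei := he i ltac:(lia); have ej := he j ltac:(lia).
have [bi0 _] := hb i ltac:(lia).
have [bj0 _] := hb j ltac:(lia).
have [_ bi1] := hb i.-1 ltac:(lia).
have [_ bj1] := hb j.+1 ltac:(lia).
have n3i : 3 * b i <= Nf ns i * b i.
  by rewrite ler_wpM2r // /Nf (ler_nat rat 3).
have n3j : 3 * b j <= Nf ns j * b j.
  by rewrite ler_wpM2r // /Nf (ler_nat rat 3).
have g1 := hg i ltac:(lia).
have g2 := hg j.-1 ltac:(lia).
have ej1 : j.-1.+1 = j by lia.
rewrite ej1 in g2.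
have [r er] : exists r, (j - i).-1 = r by eexists.
have er2 : (j - i)%N = r.+1 by lia.
rewrite er in e1; rewrite er2 in e2.
move: e1 e2 ei ej; rewrite -(addn1 r) natrD. nra.
Qed.

Definition shp (A m B : nat) : seq nat := nseq A.-1 2%N ++ m :: nseq B.-1 2%N.

Lemma size_shp A m B : (0 < B)%N -> size (shp A m B) = (A.-1 + B)%N.
Proof. by move=> hB; rewrite size_cat /= !size_nseq; lia. Qed.

Lemma nth_shp A m B k : (0 < A)%N -> (0 < B)%N -> (0 < k < A + B)%N ->
  nth 0%N (shp A m B) k.-1 = if k == A then m else 2%N.
Proof.
move=> hA hB hk; rewrite /shp nth_cat size_nseq.
case: ifP => h1.
  rewrite nth_nseq h1; case: eqP => //; lia.
have -> : (k.-1 - A.-1)%N = (k - A)%N by lia.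
case: eqP => [->|ne]; first by rewrite subnn.
have -> : (k - A)%N = (k - A).-1.+1 by lia.
rewrite /= nth_nseq; case: ifP => //; lia.
Qed.

Lemma rev_shp A m B : rev (shp A m B) = shp B m A.
Proof. by rewrite /shp rev_cat rev_cons !rev_nseq cat_rcons. Qed.

Lemma Nf_shp A m B k : (0 < A)%N -> (0 < B)%N -> (0 < k < A + B)%N ->
  Nf (shp A m B) k = if k == A then m%:R else 2.
Proof. by move=> *; rewrite /Nf nth_shp //; case: eqP. Qed.

Lemma nec A m B b : (2 <= A)%N -> (1 <= B)%N -> (3 <= m)%N ->
  solb (shp A m B) b -> goodb (shp A m B) b ->
  ((m - 2) * B * (A - 1) < A + B)%N.
Proof.
move=> hA hB hm [h0 [hL he]] hg.
rewrite /goodb size_shp // in hL he hg.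
have hL' : b (A + B)%N = 1 by rewrite -hL; congr b; lia.
have E k : (0 < k < A + B)%N -> k != A -> b k.-1 + b k.+1 = 2 * b k.
  move=> hk nk; rewrite -he; last by lia.
  rewrite Nf_shp //; first by rewrite (negbTE nk). lia.
have l1 := @lin b 0 A.
have l2 := @lin b A (A + B).
have e1 := l1 (fun k hk => E k ltac:(lia) ltac:(lia)) A ltac:(lia).
have e1' := l1 (fun k hk => E k ltac:(lia) ltac:(lia)) A.-1 ltac:(lia).
have e2 := l2 (fun k hk => E k ltac:(lia) ltac:(lia)) B ltac:(lia).
have eA := he A ltac:(lia).
rewrite Nf_shp ?eqxx // in eA; last by lia.
have g := hg A.-1 ltac:(lia).
have eA1 : A.-1.+1 = A by lia.
rewrite eA1 in g.
rewrite add0n in e1 e1'. rewrite hL' h0 in e1 e1' e2.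
have ea : (A.-1)%:R = A%:R - 1 :> rat by rewrite -subn1 natrB //; lia.
rewrite ea in e1'.
set d1 := b 1%N - 1 in e1 e1'.
set d2 := b A.+1 - b A in e2.
have eAp : b A.+1 = b A + d2 by rewrite /d2; lra.
rewrite eAp -eA1 /= in eA. rewrite eA1 in eA.
rewrite -(ltr_nat rat) !natrM !natrD !natrB //; last by lia.
set a := A%:R in e1 e1' ea *. set bb := B%:R in e2 *. set M := m%:R in eA *.
have a2 : 2 <= a by rewrite /a (ler_nat rat 2).
have b1 : 1 <= bb by rewrite /bb (ler_nat rat 1).
have m3 : 3 <= M by rewrite /M (ler_nat rat 3).
set u := - d1.
have ebA : b A = 1 - a * u by rewrite /u; lra.
have ebA1 : b A.-1 = b A + u by rewrite /u; lra.
have hd2 : bb * d2 = a * u by lra.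
have hu : u * (2 * a - 1) < 1 by lra.
have hK : (M - 2) * bb = u * (a + bb + (M - 2) * a * bb).
  have h1 : (M - 2) * b A = d2 + u by lra.
  have h2 : bb * ((M-2) * b A) = a*u + bb*u by rewrite h1 mulrDr hd2.
  rewrite ebA in h2. lra.
set K := a + bb + (M - 2) * a * bb in hK.
have K0 : 0 < K.
  have : 0 <= (M - 2) * a * bb by rewrite !mulr_ge0 //; lra.
  rewrite /K; lra.
have : (M - 2) * bb * (2 * a - 1) < K.
  rewrite hK -mulrA mulrC -mulrA. rewrite -{2}(mulr1 K) ltr_pM2l //.
  by rewrite mulrC.
rewrite /K. lra. all: lia.
Qed.

Definition rb (ns : seq nat) (b : nat -> rat) : nat -> rat :=
  fun i => b ((size ns).+1 - i)%N.

Lemma solb_rev ns b : solb ns b -> solb (rev ns) (rb ns b).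
Proof.
case=> h0 [hL he]; rewrite /solb /rb size_rev subn0 subnn; split => //; split => //.
move=> i hi.
have := he ((size ns).+1 - i)%N ltac:(lia).
rewrite /Nf nth_rev; last by lia.
have -> : (size ns - i.-1.+1)%N = ((size ns).+1 - i).-1 by lia.
have -> : ((size ns).+1 - i.+1)%N = ((size ns).+1 - i).-1 by lia.
have -> : ((size ns).+1 - i.-1)%N = ((size ns).+1 - i).+1 by lia.
by move=> ->; rewrite addrC.
Qed.

Lemma goodb_rev1 ns b : goodb (rev ns) (rb ns b) -> goodb ns b.
Proof.
rewrite /goodb /rb size_rev => h k hk.
have := h (size ns - k)%N ltac:(lia).
have -> : ((size ns).+1 - (size ns - k))%N = k.+1 by lia.
have -> : ((size ns).+1 - (size ns - k).+1)%N = k by lia.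
by rewrite addrC.
Qed.

Lemma goodb_rev2 ns b : goodb ns b -> goodb (rev ns) (rb ns b).
Proof.
rewrite /goodb /rb size_rev => h k hk.
have := h (size ns - k)%N ltac:(lia).
have -> : ((size ns).+1 - k)%N = (size ns - k).+1 by lia.
have -> : ((size ns).+1 - k.+1)%N = (size ns - k)%N by lia.
by rewrite addrC.
Qed.

Lemma suff1 l b : (0 < l)%N -> solb (nseq l 2%N) b -> goodb (nseq l 2%N) b.
Proof.
move=> hl [h0 [hL he]] k; rewrite size_nseq in hL he * => hk.
have E j : (0 < j < l.+1)%N -> b j.-1 + b j.+1 = 2 * b j.
  move=> hj; rewrite -he; last by lia.
  by rewrite /Nf nth_nseq; case: ifP => //; lia.
have e := @lin b 0 l.+1 E.
have := e l.+1 ltac:(lia); rewrite add0n hL h0 => eL.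
have d0 : b 1%N - 1 = 0.
  have : (l.+1)%:R * (b 1%N - 1) = 0 :> rat by lra.
  by move/eqP; rewrite mulf_eq0 pnatr_eq0 /= => /eqP.
have bk j : (j <= l.+1)%N -> b j = 1.
  by move=> hj; have := e j ltac:(lia); rewrite add0n h0 d0 mulr0 addr0.
rewrite bk ?bk; [lra|lia|lia].
Qed.

Lemma suff2 A b : (2 <= A)%N -> solb (shp A 3 1) b -> goodb (shp A 3 1) b.
Proof.
move=> hA [h0 [hL he]] k; rewrite /goodb size_shp // in hL he * => hk.
have hL' : b A.+1 = 1 by rewrite -hL; congr b; lia.
have E j : (0 < j < A)%N -> b j.-1 + b j.+1 = 2 * b j.
  move=> hj; rewrite -he; last by lia.
  rewrite Nf_shp; [|lia|lia|lia].
  by case: eqP => //; lia.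
have e := @lin b 0 A E.
have eA := he A ltac:(lia).
rewrite Nf_shp ?eqxx in eA; [|lia|lia|lia].
rewrite hL' in eA.
have e1 := e A ltac:(lia). have e2 := e A.-1 ltac:(lia).
have ek := e k ltac:(lia). have ek1 := e k.+1 ltac:(lia).
rewrite !add0n h0 in e1 e2 ek ek1.
have eAn : A%:R = (A.-1)%:R + 1 :> rat by rewrite natr1; congr _%:R; lia.
rewrite eAn in e1. rewrite -natr1 in ek1.
set d := b 1%N - 1 in e1 e2 ek ek1.
set a := (A.-1)%:R in e1 e2.
set kk := k%:R in ek ek1.
have ekA : kk <= a.
  by rewrite /kk /a ler_nat; lia.
have h : 1 + (2 * a + 3) * d = 0 by lra.
rewrite ek ek1.
have dn : d < 0.
  have : 0 <= a by rewrite /a ler0n.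
  nra.
nra.
Qed.

Lemma suff3 b : solb [:: 2; 2; 3; 2]%N b -> goodb [:: 2; 2; 3; 2]%N b.
Proof.
case=> h0 [hL he] k hk.
have := he 1%N isT; have := he 2%N isT; have := he 3%N isT; have := he 4%N isT.
rewrite /Nf /= in hL * => e4 e3 e2 e1.
by case: k hk => [|[|[|[|k]]]] //= _; lra.
Qed.

Lemma suff4 b : solb [:: 2; 3; 2]%N b -> goodb [:: 2; 3; 2]%N b.
Proof.
case=> h0 [hL he] k hk.
have := he 1%N isT; have := he 2%N isT; have := he 3%N isT.
rewrite /Nf /= in hL * => e3 e2 e1.
by case: k hk => [|[|[|k]]] //= _; lra.
Qed.

Lemma suff5 b : solb [:: 2; 4]%N b -> goodb [:: 2; 4]%N b.
Proof.
case=> h0 [hL he] k hk.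
have := he 1%N isT; have := he 2%N isT.
rewrite /Nf /= in hL * => e2 e1.
by case: k hk => [|[|k]] //= _; lra.
Qed.

Lemma suff_list ns b : in_list ns -> solb ns b -> goodb ns b.
Proof.
case=> [[al [h ->]]|[[al [h ->]]|[->|[->|[->|[n [hn ->]]]]]]].
- exact: suff1.
- have -> : rcons (nseq al 2%N) 3%N = shp al.+1 3 1 by rewrite /shp -cats1.
  by apply: suff2; lia.
- exact: suff3.
- exact: suff4.
- exact: suff5.
- by move=> _ k /=; lia.
Qed.

Definition Bad (ns : seq nat) : Prop :=
  exists i j, (0 < i)%N /\ (i < j)%N /\ (j <= size ns)%N /\
    (3 <= nth 0 ns i.-1)%N /\ (3 <= nth 0 ns j.-1)%N /\
    forall k, (i < k < j)%N -> nth 0 ns k.-1 = 2%N.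

Lemma Bad_cons x t : Bad t -> Bad (x :: t).
Proof.
case=> i [j [i0 [ij [jl [hi [hj hk]]]]]].
exists i.+1, j.+1; split; first by lia. split; first by lia.
split; first by rewrite /=; lia.
split; first by have -> : (i.+1).-1 = i.-1.+1 by lia.
split; first by have -> : (j.+1).-1 = j.-1.+1 by lia.
move=> k hk'; have -> : k.-1 = (k.-1).-1.+1 by lia.
by rewrite /= hk //; lia.
Qed.

Lemma decomp ns : all (fun n => 2 <= n)%N ns -> (0 < size ns)%N ->
  ns = nseq (size ns) 2%N \/
  (exists A m B, (0 < A)%N /\ (0 < B)%N /\ (3 <= m)%N /\ ns = shp A m B) \/
  Bad ns.
Proof.
elim: ns => [|x t IH] //= /andP[hx ht] _.
have [x2|x3] : x = 2%N \/ (3 <= x)%N by lia.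
  subst x; case: t IH ht => [|y t] IH ht; first by left.
  case: (IH ht isT) => [e|[[A [m [B [A0 [B0 [m3 e]]]]]]|bd]].
  - by left; rewrite {1}e.
  - right; left; exists A.+1, m, B; do 3 (split => //).
    by rewrite e /shp /= -{2}(prednK A0).
  - by right; right; apply: Bad_cons.
case: t IH ht => [|y t] IH ht.
  by right; left; exists 1%N, x, 1%N.
case: (IH ht isT) => [e|[[A [m [B [A0 [B0 [m3 e]]]]]]|bd]].
- right; left; exists 1%N, x, (size (y :: t)).+1; do 3 (split => //).
  by rewrite {1}e.
- right; right; exists 1%N, A.+1; split => //; split; first by lia.
  split; first by have := size_shp A m B B0; rewrite -e /=; lia.
  split => //; split.
    have := nth_shp A m B A A0 B0 ltac:(lia).
    rewrite eqxx -e; case: (A) A0 => //= A' _ ->; lia.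
  move=> k hk.
  have := nth_shp A m B k.-1 A0 B0 ltac:(lia).
  rewrite -e; have -> : k.-1 = (k.-1).-1.+1 by lia.
  move=> /= ->; case: eqP => //; lia.
- by right; right; apply: Bad_cons.
Qed.

Lemma cl A m B : (1 <= B <= A)%N -> (3 <= m)%N -> (2 <= A)%N -> ((m - 2) * B * (A - 1) < A + B)%N ->
  (m = 3 /\ B = 1) \/ (m = 3 /\ B = 2 /\ A = 2) \/ (m = 3 /\ B = 2 /\ A = 3) \/ (m = 4 /\ B = 1 /\ A = 2).
Proof.
move=> hB hm hA h.
have [m3|m4] : m = 3 \/ (4 <= m)%N by lia.
  subst m. have [->|B2] : B = 1 \/ (2 <= B)%N by lia.
    by left.
  have [->|B3] : B = 2 \/ (3 <= B)%N by lia.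
    have : (A < 4)%N by nia. lia.
  exfalso; nia.
right; right; right.
have [eB|B2] : B = 1 \/ (2 <= B)%N by lia.
  subst B; rewrite muln1 in h.
  have : (2 * (A - 1) <= (m-2) * (A - 1))%N by apply: leq_mul; lia.
  move=> h2. have A2 : A = 2 by lia. subst A. split => //. lia.
exfalso.
have h3 : (2 * (B * (A - 1)) <= (m - 2) * (B * (A - 1)))%N by apply: leq_mul; lia.
have h4 : (2 * (A - 1) <= B * (A - 1))%N by apply: leq_mul; lia.
rewrite mulnA in h3. lia.
Qed.

Lemma classify A m B : (1 <= B <= A)%N -> (3 <= m)%N ->
  (A = 1%N \/ ((2 <= A)%N /\ ((m - 2) * B * (A - 1) < A + B)%N)) ->
  in_list (shp A m B).
Proof.
move=> hB hm [A1|[hA h]].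
  have B1 : B = 1%N by lia.
  subst; do 5 right; by exists m.
case: (cl A m B hB hm hA h) => [[-> ->]|[[-> [-> ->]]|[[-> [-> ->]]|[-> [-> ->]]]]].
- right; left; exists A.-1; split; first by lia.
  by rewrite /shp cats1.
- by do 3 right; left.
- by do 2 right; left.
- by do 4 right; left.
Qed.

Lemma main_b ns b : (0 < size ns)%N -> all (fun n => 2 <= n)%N ns -> solb ns b ->
  (goodb ns b <-> in_list ns \/ in_list (rev ns)).
Proof.
move=> hs hall hsol; split; last first.
  case=> hl; first exact: suff_list.
  apply: goodb_rev1; apply: suff_list => //; exact: solb_rev.
move=> hg.
case: (decomp ns hall hs) => [e|[[A [m [B [A0 [B0 [m3 e]]]]]]|bd]].
- by left; left; exists (size ns); split.
- have [BA|AB] := leqP B A.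
    left; rewrite e; apply: classify => //; first by lia.
    have [A1|A2] : A = 1%N \/ (2 <= A)%N by lia.
      by left.
    right; split => //; apply: (nec A m B b A2 B0 m3); by rewrite -e.
  right; rewrite e rev_shp; apply: classify => //; first by lia.
  right; split; first by lia.
  have er : rev ns = shp B m A by rewrite e rev_shp.
  apply: (nec B m A (rb ns b)); [lia|lia|lia| |].
    by rewrite -er; apply: solb_rev.
  by rewrite -er; apply: goodb_rev2.
- case: bd => i [j [i0 [ij [jl [hi [hj hk]]]]]].
  by exfalso; apply: (bad ns b i j hall hsol i0 ij jl hi hj hk).
Qed.

Lemma sum_delta (a : seq rat) l k : size a = l ->
  \sum_(j < l) a`_j * ((j : nat) == k)%:R = a`_k.
Proof.
move=> sa; have [hk|hk] := ltnP k l.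
  rewrite (bigD1 (Ordinal hk)) //= eqxx mulr1 big1 ?addr0 // => j /negbTE hj.
  by rewrite -val_eqE /= in hj; rewrite hj mulr0.
rewrite [RHS]nth_default; last by rewrite sa.
rewrite big1 // => j _; rewrite (_ : (j == k :> nat) = false) ?mulr0 //; apply: negbTE; by rewrite neq_ltn (leq_trans (ltn_ord j) hk).
Qed.

Lemma Eint_split ns j i : Eint ns j i =
  (j == i)%:R * - (nth 0%N ns i)%:R + (j == i.+1)%:R + (j.+1 == i)%:R.
Proof.
have f1 : (i == i.+1) = false by apply/eqP; lia.
have f2 : (i.+1 == i) = false by apply/eqP; lia.
have f3 : (i.+2 == i) = false by apply/eqP; lia.
rewrite /Eint; have [->|ne] := eqVneq j i.
  by rewrite f1 f2 /= mul1r !addr0.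
rewrite /= mul0r add0r.
have [->|n1] := eqVneq j i.+1.
  by rewrite /= f3 addr0.

case: eqP => [->|n2]; first by rewrite eqxx.
have f4 : (j.+1 == i) = false by apply/eqP => e; apply: n2.
by rewrite f4.
Qed.

Lemma sum_eq ns (a : seq rat) i : size a = size ns ->
  \sum_(j < size ns) a`_j * Eint ns j i =
  - (nth 0%N ns i)%:R * a`_i + a`_i.+1 + (if i is i'.+1 then a`_i' else 0).
Proof.
move=> sa.
under eq_bigr => j _ do rewrite Eint_split !mulrDr.
rewrite !big_split /=.
rewrite (_ : \sum_(j < size ns) a`_j * (((j : nat) == i)%:R * - (nth 0%N ns i)%:R) =
   - (nth 0%N ns i)%:R * a`_i); last first.
  rewrite -(sum_delta a (size ns) i sa) mulr_sumr; apply: eq_bigr => j _; ring.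
rewrite (sum_delta a (size ns) i.+1 sa).
case: i => [|i].
  by rewrite big1 ?addr0 // => j _; rewrite mulr0.
have := sum_delta a (size ns) i sa.
by under eq_bigr => j _ do rewrite eqSS; move=> ->.
Qed.

Definition bf (a : seq rat) (i : nat) : rat := 1 - (if i is j.+1 then a`_j else 0).

Lemma disc_solb ns a : is_discrepancy ns a -> solb ns (bf a).
Proof.
case=> sa he; split; first by rewrite /bf subr0.
split; first by rewrite /bf nth_default ?subr0 // sa.
case=> [|i] // hi.
have := he i ltac:(lia); rewrite sum_eq // /Nf /bf /=.
case: i hi => [|i] hi /=; lra.
Qed.

Theorem proposition4p3 (ns : seq nat) (a : seq rat) :
  (0 < size ns)%N -> all (fun n => 2 <= n)%N ns -> is_discrepancy ns a ->
  ((forall k : nat, (k.+1 < size ns)%N -> a`_k + a`_k.+1 < 1) <->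
   (in_list ns \/ in_list (rev ns))).
Proof.
move=> hs hall hd.
rewrite -(main_b ns (bf a) hs hall (disc_solb ns a hd)).
split.
  move=> h k hk; rewrite /bf; case: k hk => [|k] hk //=.
  have := h k ltac:(lia); lra.
move=> h k hk; have := h k.+1 ltac:(lia); rewrite /bf /=; lra.
Qed.
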